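(* Let $q$ be a power of an odd prime with $q\equiv1\pmod 4$, $t=\frac{q-1}{4}$, $T$ a generator of $\widehat{\mathbb F_q^{\times}}$, and $\lambda\in\mathbb F_q$ with $\lambda^4=1$. Then $$\frac{3}{q-1}\sum_{j=0}^{q-2}\frac{g(T^{j})^2\,g(T^{2t+j})^2}{g(T^{4j})}\,T^{4j}(4\lambda)=-6q+3q\,T^t(-1).$$
   Context: Characters are extended by $\chi(0)=0$. With $\mathrm{tr}:\mathbb F_q\to\mathbb F_p$ the trace, $\zeta$ a fixed primitive $p$-th root of unity and $\theta(x)=\zeta^{\mathrm{tr}(x)}$, the Gauss sum is $g(\chi)=\sum_{x\in\mathbb F_q}\chi(x)\theta(x)$ (so $g$ of the trivial character is $-1$). *)

(* Defs.v *)
From HB Require Import structures.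
From mathcomp Require Import all_boot all_order all_algebra all_field.
Set Implicit Arguments. Unset Strict Implicit. Unset Printing Implicit Defensive.
Import Order.TTheory GRing.Theory Num.Theory.
Local Open Scope ring_scope.

Definition is_mchar (F : finFieldType) (chi : F -> algC) : Prop :=
  [/\ chi 0 = 0,
      (forall x y : F, chi (x * y) = chi x * chi y) &
      (forall x : F, x != 0 -> chi x != 0)].

(* j-th power of a character in the character group (still extended by 0 at 0;
   so the 0-th power is the trivial character with value 0 at 0). *)
Definition mchar_pow (F : finFieldType) (chi : F -> algC) (j : nat) (x : F) : algC :=
  if x == 0 then 0 else chi x ^+ j.

Definition mchar_generator (F : finFieldType) (T : F -> algC) : Prop :=
  is_mchar T /\
  forall chi : F -> algC, is_mchar chi ->
    exists j : nat, forall x : F, chi x = mchar_pow T j x.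

(* Absolute trace F_q -> F_p, q = p^n, as an element of F (lies in the prime field). *)
Definition abs_trace (F : finFieldType) (p : nat) (x : F) : F :=
  \sum_(i < logn p #|F|) x ^+ (p ^ i).

Definition trace_nat (F : finFieldType) (p : nat) (x : F) : nat :=
  if [pick k : 'I_p | abs_trace p x == (k : nat)%:R] is Some k then (k : nat) else 0%N.

Definition theta (F : finFieldType) (p : nat) (zeta : algC) (x : F) : algC :=
  zeta ^+ trace_nat p x.

Definition gauss (F : finFieldType) (p : nat) (zeta : algC) (chi : F -> algC) : algC :=
  \sum_(x : F) chi x * theta p zeta x.

(* Main.v *)
Require Import Defs.
From HB Require Import structures.
From mathcomp Require Import all_boot all_order all_algebra all_field.
From mathcomp Require Import cyclic ring zify.
Set Implicit Arguments. Unset Strict Implicit. Unset Printing Implicit Defensive.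
Import Order.TTheory GRing.Theory Num.Theory.
Local Open Scope ring_scope.


Section Trace.
Variables (F : finFieldType) (p : nat) (zeta : algC).
Hypotheses (hp : prime p) (hchar : p \in [pchar F]) (hzeta : p.-primitive_root zeta).

Let m := logn p #|F|.

Lemma cardF : #|F| = (p ^ m)%N.
Proof. exact: (card_pprimeChar hchar). Qed.

Lemma m_gt0 : (0 < m)%N.
Proof.
rewrite lt0n; apply/negP => /eqP m0.
have := finNzRing_gt1 F; by rewrite cardF m0.
Qed.

Lemma frobD (x y : F) i : (x + y) ^+ (p ^ i) = x ^+ (p ^ i) + y ^+ (p ^ i).
Proof.
elim: i => [|i IH]; first by rewrite !expr1.
rewrite expnSr !exprM IH.
have := pFrobenius_autD_comm hchar (mulrC (x ^+ (p ^ i)) (y ^+ (p ^ i))).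
by rewrite !pFrobenius_autE.
Qed.

Lemma trD (x y : F) : abs_trace p (x + y) = abs_trace p x + abs_trace p y.
Proof. by rewrite /abs_trace -big_split; apply: eq_bigr => i _; rewrite frobD. Qed.

Lemma trX (x : F) : abs_trace p x ^+ p = abs_trace p x.
Proof.
have e : abs_trace p x ^+ p = pFrobenius_aut hchar (abs_trace p x) by [].
rewrite e /abs_trace rmorph_sum /=.
rewrite -/m; have cF := cardF; have := m_gt0; move: cF; case: m => // k cF _.
rewrite big_ord_recr big_ord_recl /= pFrobenius_autE -exprM -expnSr -cF expf_card expn0 expr1 addrC.
congr (_ + _); apply: eq_bigr => i _.
by rewrite pFrobenius_autE -exprM -expnSr.
Qed.

Lemma natF_inj a b : (a < p)%N -> (b < p)%N -> a%:R = b%:R :> F -> a = b.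
Proof.
wlog le_ab : a b / (a <= b)%N.
  move=> IH ha hb e; case: (leqP a b) => [h|h]; first exact: IH.
  by apply/esym/IH => //; apply: ltnW.
move=> ha hb e.
have : (p %| b - a)%N by rewrite (dvdn_pcharf hchar) natrB // e subrr.
move=> d; have : (b - a < p)%N by apply: leq_ltn_trans (leq_subr _ _) hb.
case: (posnP (b - a)) => [|h]; first by move/eqP; rewrite subn_eq0 => /(conj le_ab)/andP; rewrite -eqn_leq => /eqP.
by move=> lt; move: (dvdn_leq h d); rewrite leqNgt lt.
Qed.

Lemma tr_nat (x : F) : exists2 k, (k < p)%N & abs_trace p x = k%:R.
Proof.
have : [exists k : 'I_p, abs_trace p x == (k : nat)%:R].
  apply: contraT => /existsPn H.
  pose rs := abs_trace p x :: [seq (i%:R : F) | i <- iota 0 p].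
  have p1 := prime_gt1 hp.
  have sP : size ('X^p - 'X : {poly F}) = p.+1.
    by rewrite size_polyDl size_polyXn // size_opp size_polyX ltnS.
  have := @max_poly_roots _ ('X^p - 'X) rs.
  rewrite sP /= size_map size_iota ltnn -size_poly_eq0 sP /=.
  have Hr : forall y : F, y ^+ p = y -> root ('X^p - 'X) y.
    by move=> y hy; rewrite rootE !hornerE hy subrr.
  rewrite Hr ?trX //= ; apply => //.
    apply/allP => y /mapP [i _ ->]; apply: Hr.
    by have := pFrobenius_aut_nat hchar i; rewrite pFrobenius_autE.
  apply/andP; split.
    apply/mapP => [[i]]; rewrite mem_iota add0n => /andP [_ hi] e.
    by have := H (Ordinal hi); rewrite /= e eqxx.
  rewrite map_inj_in_uniq ?iota_uniq //.
  move=> i j; rewrite !mem_iota !add0n => /andP [_ hi] /andP [_ hj].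
  exact: natF_inj.
by case/existsP => k /eqP e; exists k.
Qed.

Definition tn (x : F) := trace_nat p x.

Lemma tnP (x : F) : (tn x < p)%N /\ (tn x)%:R = abs_trace p x.
Proof.
rewrite /tn /trace_nat; case: pickP => [k /eqP -> //|H].
have [k kp e] := tr_nat x.
by have := H (Ordinal kp); rewrite /= e eqxx.
Qed.

Lemma natF_mod a b : a%:R = b%:R :> F -> a = b %[mod p].
Proof.
move=> e; apply: natF_inj; rewrite ?ltn_mod ?prime_gt0 //.
by rewrite !(GRing.natr_mod_pchar hchar).
Qed.

Lemma thetaD (x y : F) : theta p zeta (x + y) = theta p zeta x * theta p zeta y.
Proof.
rewrite /theta -exprD; apply/eqP; rewrite (eq_prim_root_expr hzeta).
apply/eqP/natF_mod; rewrite natrD.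
have [_ ->] := tnP (x + y); have [_ ->] := tnP x; have [_ ->] := tnP y.
exact: trD.
Qed.

Lemma theta0 : theta p zeta (0:F) = 1.
Proof.
rewrite /theta -/(tn (0:F)); have [h e] := tnP (0:F).
suff -> : tn (0:F) = 0%N by [].
apply: natF_inj => //; first exact: prime_gt0.
by rewrite e /abs_trace big1 // => i _; rewrite expr0n expn_eq0 -leqn0 leqNgt prime_gt0.
Qed.

Lemma tr_nz : exists a : F, abs_trace p a != 0.
Proof.
apply/existsP; apply: contraT => /existsPn H.
pose P : {poly F} := \sum_(i < m) 'X^(p ^ i).
have p1 := prime_gt1 hp.
have mm : (m.-1 < m)%N by rewrite prednK ?m_gt0.
have cP : P`_(p ^ m.-1) = 1.
  rewrite /P coef_sum (bigD1 (Ordinal mm)) //= coefXn eqxx big1 ?addr0 //.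
  move=> i /negbTE ne; rewrite coefXn eqn_exp2l //.
  case: eqP => // e; exfalso; move: ne; rewrite -(inj_eq val_inj) /= e eqxx //.
have Pn0 : P != 0 by apply/eqP => P0; move: cP; rewrite P0 coef0 => /eqP; rewrite eq_sym oner_eq0.
have := @max_poly_roots _ P (enum F) Pn0.
rewrite enum_uniq -cardE cardF.
have -> : all (root P) (enum F).
  apply/allP => y _; rewrite rootE /P horner_sum.
  rewrite (eq_bigr (fun i : 'I_m => y ^+ (p ^ i))) => [|i _]; last by rewrite hornerXn.
  by have := H y; rewrite negbK.
move=> /(_ isT isT) lt.
have : (size P <= (expn p m.-1).+1)%N.
  apply: leq_trans (size_sum _ _ _) _; apply/bigmax_leqP => i _.
  by rewrite size_polyXn ltnS leq_exp2l // -ltnS prednK ?m_gt0.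
move=> /(leq_trans lt); rewrite ltnS -(prednK m_gt0) expnS leqNgt.
rewrite -{1}(mul1n (expn p m.-1)) ltn_mul2r p1 expn_gt0 prime_gt0 //.
Qed.

Lemma sum_theta : \sum_(x : F) theta p zeta x = 0.
Proof.
have [a ha] := tr_nz.
have t1 : theta p zeta a != 1.
  rewrite /theta -(prim_order_dvd hzeta).
  have [lt e] := tnP a; rewrite -/(tn a).
  apply/negP => d; move: ha; rewrite -e.
  by rewrite -(dvdn_pcharf hchar) d.
have : \sum_(x : F) theta p zeta x = theta p zeta a * \sum_(x : F) theta p zeta x.
  rewrite mulr_sumr (reindex_inj (addrI a)) /=.
  by apply: eq_bigr => x _; rewrite thetaD.
move/eqP; rewrite -subr_eq0 -{1}(mul1r (\sum_x _)) -mulrBl mulf_eq0 subr_eq0 eq_sym (negbTE t1) /=.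
by move/eqP.
Qed.

Lemma sum_theta_mul (a : F) : \sum_(y : F) theta p zeta (a * y) = if a == 0 then (#|F|)%:R else 0.
Proof.
case: eqP => [->|/eqP a0].
  by rewrite (eq_bigr (fun _ => 1)) => [|y _]; rewrite ?mul0r ?theta0 // sumr_const.
transitivity (\sum_(x : F) theta p zeta x); last exact: sum_theta.
by rewrite [RHS](reindex_inj (mulfI a0)).
Qed.

End Trace.


Section Chars.
Variables (F : finFieldType) (T : F -> algC).
Hypothesis hT : mchar_generator T.
Local Notation n := (#|F|.-1).
Local Notation c := (mchar_pow T).

Lemma T0 : T 0 = 0. Proof. by case: hT => [[]]. Qed.
Lemma TM x y : T (x * y) = T x * T y. Proof. by case: hT => [[]]. Qed.
Lemma Tnz x : x != 0 -> T x != 0. Proof. by case: hT => [[_ _ H] _]; exact: H. Qed.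
Lemma T1 : T 1 = 1.
Proof.
have := TM 1 1; rewrite mulr1 => e; have nz := Tnz (oner_neq0 F).
by apply: (mulfI nz); rewrite mulr1 -e.
Qed.
Lemma TX x k : T (x ^+ k) = T x ^+ k.
Proof. by elim: k => [|k IH]; rewrite ?T1 // !exprS TM IH. Qed.

Lemma n_gt0 : (0 < n)%N.
Proof. by rewrite -ltnS prednK ?finNzRing_gt1 // ltnW // finNzRing_gt1. Qed.

Lemma cardFn : #|F| = n.+1.
Proof. by rewrite prednK // ltnW // finNzRing_gt1. Qed.

Lemma xn1 (x : F) : x != 0 -> x ^+ n = 1.
Proof.
move=> nz; apply: (mulfI nz); rewrite mulr1 -exprS -cardFn; exact: expf_card.
Qed.

Lemma Tn x : x != 0 -> T x ^+ n = 1.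
Proof. by move=> nz; rewrite -TX xn1 // T1. Qed.

Lemma cM j x y : c j (x * y) = c j x * c j y.
Proof.
rewrite /mchar_pow mulf_eq0; case: (x =P 0) => [_|_]; first by rewrite mul0r.
by case: (y =P 0) => [_|_]; rewrite ?mulr0 // TM exprMn.
Qed.

Lemma cD i j x : c (i + j) x = c i x * c j x.
Proof. by rewrite /mchar_pow; case: (x == 0); rewrite ?mul0r // exprD. Qed.

Lemma c_mod j x : c (j %% n) x = c j x.
Proof.
rewrite /mchar_pow; case: (x =P 0) => // /eqP nz.
by rewrite expr_mod // Tn.
Qed.

Lemma c1 j : c j 1 = 1.
Proof. by rewrite /mchar_pow oner_eq0 T1 expr1n. Qed.

Lemma c0 j : c j 0 = 0.
Proof. by rewrite /mchar_pow eqxx. Qed.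

Lemma c_nz j x : x != 0 -> c j x != 0.
Proof. by move=> nz; rewrite /mchar_pow (negbTE nz) expf_neq0 // Tnz. Qed.

Lemma c_dvd j x : (n %| j)%N -> c j x = (x != 0)%:R.
Proof.
move=> /dvdnP [k ->]; rewrite /mchar_pow; case: (x =P 0) => // /eqP nz.
by rewrite mulnC exprM Tn // expr1n.
Qed.

Lemma exists_w : exists w : F, n.-primitive_root w.
Proof.
have := @has_prim_root F n (enum (predC1 (0:F))) n_gt0.
have a1 : all n.-unity_root (enum (predC1 (0:F))).
  by apply/allP => x; rewrite mem_enum => nz; apply/unity_rootP; exact: xn1.
have s1 : (n <= size (enum (predC1 (0:F)%R)))%N by rewrite -cardE cardC1.
move=> /(_ a1 (enum_uniq _) s1) /hasP [w _ pw].
by exists w.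
Qed.

Lemma Tprim : exists w : F, n.-primitive_root w /\ n.-primitive_root (T w).
Proof.
have [w pw] := exists_w.
have [rho prho] := C_prim_root_exists n_gt0.
have wnz : w != 0.
  by apply/eqP => w0; move: (prim_expr_order pw); rewrite w0 expr0n; case: (n) n_gt0 => //= k _ /eqP; rewrite eq_sym oner_eq0.
have rnz : rho != 0.
  by apply/eqP => w0; move: (prim_expr_order prho); rewrite w0 expr0n; case: (n) n_gt0 => //= k _ /eqP; rewrite eq_sym oner_eq0.
pose dlog (x : F) : nat := if [pick i : 'I_n | w ^+ i == x] is Some i then val i else 0%N.
have dlogP x : x != 0 -> w ^+ dlog x = x.
  move=> nz; rewrite /dlog; case: pickP => [i /eqP //|H].
  have [i e] := prim_rootP pw (xn1 nz).
  by have := H i; rewrite -e eqxx.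
pose chi (x : F) := if x == 0 then 0 else rho ^+ dlog x.
have chiX k : chi (w ^+ k) = rho ^+ k.
  rewrite /chi (negbTE (expf_neq0 k wnz)); apply/eqP.
  by rewrite (eq_prim_root_expr prho) -(eq_prim_root_expr pw) dlogP // expf_neq0.
have mchi : is_mchar chi.
  split; first by rewrite /chi eqxx.
    move=> x y; case: (x =P 0) => [->|/eqP xnz]; first by rewrite mul0r /chi eqxx mul0r.
    case: (y =P 0) => [->|/eqP ynz]; first by rewrite mulr0 /chi eqxx mulr0.
    by rewrite -(dlogP x xnz) -(dlogP y ynz) -exprD !chiX exprD.
  by move=> x nz; rewrite /chi (negbTE nz) expf_neq0.
have [j0 hj] := hT.2 chi mchi.
exists w; split => //.
have [k pk dk] := prim_order_exists n_gt0 (Tn wnz).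
suff nk : (n %| k)%N.
  by have /eqP <- : k == n by rewrite eqn_dvd dk nk.
rewrite (prim_order_dvd prho) -chiX hj /mchar_pow (negbTE (expf_neq0 k wnz)).
by rewrite TX (prim_expr_order pk) expr1n.
Qed.


Lemma sum1 (f : F -> algC) a : \sum_z ((a == z)%:R * f z) = f a.
Proof.
rewrite (bigD1 a) //= eqxx mul1r big1 ?addr0 // => z.
by rewrite eq_sym => /negbTE ->; rewrite mul0r.
Qed.

Lemma ortho1 x : x != 0 -> \sum_(j < n) c j x = if x == 1 then n%:R else 0.
Proof.
move=> nz; have [w [pw ptw]] := Tprim.
case: (x =P 1) => [->|/eqP x1].
  by rewrite (eq_bigr (fun _ => 1)) => [|j _]; rewrite ?c1 // sumr_const card_ord.
have z1 : T x != 1.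
  apply: contra x1 => /eqP tx1.
  have [k e] := prim_rootP pw (xn1 nz).
  move: tx1; rewrite e TX => /eqP; rewrite -(prim_order_dvd ptw) => d.
  case: (posnP k) => [k0|kp]; first by move: e; rewrite k0 expr0.
  by move: (dvdn_leq kp d); rewrite leqNgt ltn_ord.
rewrite (eq_bigr (fun j : 'I_n => T x ^+ j)) => [|j _]; last by rewrite /mchar_pow (negbTE nz).
have := subrX1 (T x) n; rewrite Tn // subrr => /esym /eqP.
by rewrite mulf_eq0 subr_eq0 (negbTE z1) /= => /eqP.
Qed.

Lemma ortho2 j : ~~ (n %| j)%N -> \sum_x c j x = 0.
Proof.
move=> nd; have [w [pw ptw]] := Tprim.
have wnz : w != 0.
  by apply/eqP => w0; move: (prim_expr_order pw); rewrite w0 expr0n; case: (n) n_gt0 => //= k _ /eqP; rewrite eq_sym oner_eq0.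
have t1 : c j w != 1 by rewrite /mchar_pow (negbTE wnz) -(prim_order_dvd ptw).
have : \sum_x c j x = c j w * \sum_x c j x.
  rewrite mulr_sumr [LHS](reindex_inj (mulfI wnz)) /=.
  by apply: eq_bigr => x _; rewrite cM.
move/eqP; rewrite -subr_eq0 -{1}(mul1r (\sum_x _)) -mulrBl mulf_eq0 subr_eq0 eq_sym (negbTE t1) /=.
by move/eqP.
Qed.

Lemma sum_c_dvd j : (n %| j)%N -> \sum_x c j x = n%:R.
Proof.
move=> d; rewrite (eq_bigr (fun x => (x != 0)%:R)) => [|x _]; last exact: c_dvd.
rewrite (bigD1 0) //= eqxx add0r.
rewrite (eq_bigr (fun _ => 1)) => [|x ->] //.
by rewrite sumr_const -(cardC1 (0:F)).
Qed.

Variable t : nat.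
Hypothesis ht : n = (4 * t)%N.
Hypothesis h2 : (2%:R : F) != 0.

Lemma t_gt0 : (0 < t)%N.
Proof. by have := n_gt0; rewrite ht muln_gt0. Qed.

Lemma phi_sq x : x != 0 -> c (2 * t) (x ^+ 2) = 1.
Proof.
move=> nz; rewrite /mchar_pow expf_eq0 /= (negbTE nz) TX -exprM.
by rewrite mulnA -ht Tn.
Qed.

Lemma phi2 x : c (2 * t) x ^+ 2 = (x != 0)%:R.
Proof.
rewrite /mchar_pow; case: (x =P 0) => [_|/eqP nz]; first by rewrite expr0n.
by rewrite -exprM [(_ * 2)%N]mulnC mulnA -ht Tn.
Qed.

Lemma phi_nonsq z : z != 0 -> (forall y, y ^+ 2 != z) -> c (2 * t) z = -1.
Proof.
move=> nz nsq; have [w [pw ptw]] := Tprim.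
have : c (2 * t) z ^+ 2 == 1 by rewrite phi2 nz.
rewrite sqrf_eq1 => /orP [/eqP h|/eqP //]; exfalso.
have [k e] := prim_rootP pw (xn1 nz).
move: h; rewrite /mchar_pow (negbTE nz) e TX -exprM => /eqP.
rewrite -(prim_order_dvd ptw) => d.
move: d e; move: (nat_of_ord k) => kk d e.
have : (2 * t * 2 %| 2 * t * kk)%N.
  by rewrite mulnAC -[(2*2)%N]/4%N -ht [X in (_ %| X)%N]mulnC.
rewrite dvdn_pmul2l ?muln_gt0 ?t_gt0 // => /dvdnP [k' ek].
by move: (nsq (w ^+ k')); rewrite -exprM -ek -e eqxx.
Qed.

Lemma count_sq z : \sum_y ((y ^+ 2 == z)%:R : algC) = 1 + c (2 * t) z.
Proof.
case: (z =P 0) => [->|/eqP nz].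
  rewrite c0 addr0 (eq_bigr (fun y => ((0 == y)%:R * 1))) => [|y _].
    by rewrite sum1.
  by rewrite mulr1 expf_eq0 /= eq_sym.
case: (boolP [exists y, y ^+ 2 == z]) => [/existsP [y0 /eqP e]|/existsPn nsq].
  have y0nz : y0 != 0 by apply: contra nz; rewrite -e => /eqP ->; rewrite expr0n.
  rewrite -e phi_sq //.
  rewrite (eq_bigr (fun y => (y0 == y)%:R * 1 + (- y0 == y)%:R * 1)) => [|y _].
    by rewrite big_split /= !sum1.
  rewrite !mulr1 eqf_sqr (eq_sym y0) (eq_sym (- y0)).
  case: (y =P y0) => [->|_]; last by rewrite add0r.
  have : y0 != - y0.
    apply: contra y0nz => /eqP h; have : y0 + y0 == 0 by rewrite {2}h subrr.
    by rewrite -mulr2n -mulr_natr mulf_eq0 (negbTE h2) orbF.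
  by move/negbTE ->; rewrite addr0.
rewrite (phi_nonsq nz nsq).
rewrite subrr big1 // => y _; by rewrite (negbTE (nsq y)).
Qed.

Lemma sum_sq (f : F -> algC) : \sum_y f (y ^+ 2) = \sum_z (1 + c (2 * t) z) * f z.
Proof.
rewrite (eq_bigr (fun y => \sum_z (y ^+ 2 == z)%:R * f z)) => [|y _].
  rewrite exchange_big; apply: eq_bigr => z _.
  by rewrite -mulr_suml count_sq.
rewrite (eq_bigr (fun z => (y ^+ 2 == z)%:R * f (y ^+ 2))) ?sum1 //.
by move=> z _; case: eqP => [->|_]; rewrite ?mul0r.
Qed.

End Chars.


Section Gauss.
Variables (F : finFieldType) (p : nat) (zeta : algC) (T : F -> algC).
Hypotheses (hp : prime p) (hchar : p \in [pchar F]) (hzeta : p.-primitive_root zeta).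
Hypothesis hT : mchar_generator T.
Local Notation n := (#|F|.-1).
Local Notation c := (mchar_pow T).
Local Notation G j := (gauss p zeta (mchar_pow T j)).
Local Notation th := (theta p zeta).

Let cM := cM hT.
Let c_mod := c_mod hT.
Let c1 := c1 hT.
Let c_nz := c_nz hT.
Let c_dvd := c_dvd hT.
Let ortho2 := ortho2 hT.
Let sum_c_dvd := sum_c_dvd hT.

Definition Jac a b := \sum_(x : F) c a x * c b (1 - x).

Lemma G_mod j : G (j %% n) = G j.
Proof. by apply: eq_bigr => x _; rewrite c_mod. Qed.

Lemma G0 : G 0 = -1.
Proof.
have := sum_theta hp hchar hzeta; rewrite (bigD1 0) //= theta0 // => /eqP.
rewrite addrC addr_eq0 => /eqP e.
rewrite /gauss (bigD1 0) //= c0 mul0r add0r -e; apply: eq_bigr => x nz.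
by rewrite c_dvd ?dvdn0 // nz mul1r.
Qed.

Lemma Ival a b s : \sum_x c a x * c b (s - x)
  = c (a + b)%N s * Jac a b + (s == 0)%:R * (c b (-1) * \sum_x c (a + b)%N x).
Proof.
case: (s =P 0) => [->|/eqP nz].
  rewrite c0 mul0r add0r mul1r mulr_sumr; apply: eq_bigr => x _.
  by rewrite sub0r -(mulN1r x) !cM cD mulrCA.
rewrite mul0r addr0 /Jac mulr_sumr [LHS](reindex_inj (mulfI nz)) /=.
apply: eq_bigr => u _.
have -> : s - s * u = s * (1 - u) by rewrite mulrBr mulr1.
by rewrite !cM cD; ring.
Qed.

Lemma Gen a b : G a * G b = Jac a b * G (a + b)%N + c b (-1) * \sum_x c (a + b)%N x.
Proof.
rewrite /gauss mulr_suml.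
transitivity (\sum_x \sum_s th s * (c a x * c b (s - x))).
  apply: eq_bigr => x _; rewrite mulr_sumr [LHS](reindex_inj (addIr (- x))) /=.
  apply: eq_bigr => s _.
  have -> : th s = th x * th (s - x) by rewrite -thetaD // addrC subrK.
  ring.
rewrite exchange_big /=.
rewrite (eq_bigr (fun s => th s * (c (a + b)%N s * Jac a b) + th s * ((s == 0)%:R * (c b (-1) * \sum_x c (a + b)%N x)))) => [|s _]; last by rewrite -mulr_sumr Ival mulrDr.
rewrite big_split /=; congr (_ + _).
  by rewrite mulr_sumr; apply: eq_bigr => s _; ring.
rewrite [LHS](bigD1 0) //= [X in _ + X]big1; last by move=> s /negbTE ->; rewrite mul0r mulr0.
by rewrite eqxx theta0 // !mul1r addr0.
Qed.


Lemma F5 a b : ~~ (n %| a + b)%N -> G a * G b = Jac a b * G (a + b)%N.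
Proof. by move=> nd; rewrite Gen ortho2 // mulr0 addr0. Qed.

Lemma F6 a b : (n %| a + b)%N -> ~~ (n %| a)%N -> G a * G b = c a (-1) * (#|F|)%:R.
Proof.
move=> dab nda.
rewrite /gauss mulr_suml (eq_bigr (fun x => \sum_y (c a x * th x) * (c b y * th y))) => [|x _]; last by rewrite mulr_sumr.
rewrite exchange_big /=.
transitivity (\sum_y \sum_u c a u * ((y != 0)%:R * th ((u + 1) * y))).
  apply: eq_bigr => y _.
  case: (y =P 0) => [->|/eqP ynz].
    by rewrite !big1 // => u _; rewrite ?c0 ?mul0r ?mulr0.
  rewrite [LHS](reindex_inj (mulIf ynz)) /=; apply: eq_bigr => u _.
  rewrite mulrDl mul1r thetaD // cM.
  have e : c a y * c b y = 1 by rewrite -cD (c_dvd y dab) ynz.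
  rewrite mul1r.
  transitivity (c a u * (c a y * c b y) * (th (u * y) * th y)); first ring.
  by rewrite e mulr1.
rewrite exchange_big /=.
rewrite (eq_bigr (fun u => c a u * ((#|F|)%:R * (u == -1)%:R - 1))) => [|u _].
  rewrite (eq_bigr (fun u => (#|F|)%:R * ((-1 == u)%:R * c a u) - c a u)) => [|u _].
    by rewrite sumrB -mulr_sumr sum1 ortho2 // subr0 mulrC.
  by rewrite (eq_sym (-1)); ring.
rewrite -mulr_sumr; congr (_ * _).
rewrite [LHS](bigD1 0) //= eqxx mul0r add0r.
rewrite (eq_bigr (fun y => th ((u + 1) * y))) => [|y ynz]; last by rewrite ynz mul1r.
have := sum_theta_mul hp hchar hzeta (u + 1).
rewrite [LHS](bigD1 0) //= mulr0 theta0 // addr_eq0 => e.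
rewrite -[X in X = _](addKr 1) e.
by case: (u == -1); rewrite ?mulr1 ?mulr0 addrC.
Qed.


Lemma Gnz j : G j != 0.
Proof.
case: (boolP (n %| j)%N) => d.
  by rewrite -G_mod (eqP d) G0 oppr_eq0 oner_eq0.
have dd : (n %| j + n.-1 * j)%N.
  by rewrite -mulSn prednK ?n_gt0 // dvdn_mulr.
have := F6 dd d; apply: contra_eqN => /eqP ->; rewrite mul0r eq_sym mulf_neq0 //.
  by rewrite c_nz // oppr_eq0 oner_eq0.
by rewrite pnatr_eq0 -lt0n; apply: ltnW; apply: finNzRing_gt1.
Qed.

Variable t : nat.
Hypothesis ht : n = (4 * t)%N.
Hypothesis h2 : (2%:R : F) != 0.

Lemma Dlem a : ~~ (n %| a)%N -> c a 4%:R * Jac a a = Jac (2 * t) a.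
Proof.
move=> nd.
pose h := (2%:R : F)^-1.
have hnz : h != 0 by rewrite invr_eq0.
have inj : injective (fun y : F => h * (1 + y)) by move=> y1 y2 /(mulfI hnz) /addrI.
rewrite /Jac [in LHS](reindex_inj inj) /=.
rewrite (eq_bigr (fun y => c a (h ^+ 2) * c a (1 - y ^+ 2))) => [|y _]; last first.
  by rewrite -!cM; congr (c a _); rewrite /h; field.
rewrite -mulr_sumr mulrA -cM.
have -> : (4%:R : F) * h ^+ 2 = 1 by rewrite /h; field.
rewrite c1 mul1r (sum_sq hT ht h2 (fun z => c a (1 - z))).
rewrite (eq_bigr (fun z => c a (1 - z) + c (2 * t) z * c a (1 - z))) => [|z _]; last by rewrite mulrDl mul1r.
rewrite big_split /=.
have injm : injective (fun z : F => 1 - z) by move=> y1 y2 /addrI /oppr_inj.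
have e0 : \sum_z c a (1 - z) = \sum_z c a z by rewrite [RHS](reindex_inj injm).
by rewrite e0 ortho2 // add0r.
Qed.

End Gauss.


Section Main.
Variables (F : finFieldType) (p : nat) (zeta : algC) (T : F -> algC) (lam : F).
Hypotheses (hp : prime p) (hchar : p \in [pchar F]) (hzeta : p.-primitive_root zeta).
Hypothesis hT : mchar_generator T.
Hypothesis hlam : lam ^+ 4 = 1.
Variable t : nat.
Hypothesis ht : #|F|.-1 = (4 * t)%N.
Hypothesis h2 : (2%:R : F) != 0.
Local Notation n := (#|F|.-1).
Local Notation q := (#|F|).
Local Notation c := (mchar_pow T).
Local Notation G j := (gauss p zeta (mchar_pow T j)).
Local Notation J := (Jac T).

Let cM := cM hT.
Let c_mod := c_mod hT.
Let c1 := c1 hT.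
Let c_nz := c_nz hT.
Let c_dvd := c_dvd hT.
Let G_mod := G_mod p zeta hT.
Let G0 := G0 hp hchar hzeta hT.
Let Gen := Gen hp hchar hzeta hT.
Let F5 := F5 hp hchar hzeta hT.
Let F6 := F6 hp hchar hzeta hT.
Let Gnz := Gnz hp hchar hzeta hT.
Let Dlem := Dlem hT ht h2.

Lemma t_pos : (0 < t)%N.
Proof. by have := n_gt0 F; rewrite ht muln_gt0. Qed.

Lemma G_addn j : G (j + n)%N = G j.
Proof. by rewrite -G_mod modnDr G_mod. Qed.

Lemma J_mod a b : J a (b %% n) = J a b.
Proof. by apply: eq_bigr => x _; rewrite c_mod. Qed.

Lemma J_addn a b : J a (b + n)%N = J a b.
Proof. by rewrite -J_mod modnDr J_mod. Qed.

Lemma ndvd k : (0 < k)%N -> (k < n)%N -> ~~ (n %| k)%N.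
Proof. move=> k0 kn; apply/negP => d; have := dvdn_leq k0 d; move: kn; clear -ht; lia. Qed.

Lemma Gn : G n = -1.
Proof. by rewrite -G_mod modnn G0. Qed.

Lemma cm1 : c (2 * t) (-1) = 1.
Proof.
rewrite /mchar_pow oppr_eq0 oner_eq0 exprM.
by rewrite -(TX hT) sqrrN expr1n (T1 hT) expr1n.
Qed.

Lemma cm1t : c t (-1) ^+ 2 = 1.
Proof. by have := cm1; rewrite /mchar_pow !oppr_eq0 !oner_eq0 -exprM mulnC. Qed.

Lemma Gphi : G (2 * t) * G (2 * t) = q%:R.
Proof.
rewrite F6 ?cm1 ?mul1r //.
  by rewrite -mulnDl ht dvdnn.
by apply: ndvd; have := t_pos; clear -ht; lia.
Qed.

Lemma nR : n%:R = q%:R - 1 :> algC.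
Proof. by rewrite -subn1 natrB // ltnW // finNzRing_gt1. Qed.

Lemma J2t0 : J (2 * t) 0 = -1.
Proof.
rewrite /J (eq_bigr (fun x => c (2 * t) x - (1 == x)%:R * c (2 * t) x)) => [|x _].
  by rewrite sumrB sum1 c1 (ortho2 hT) ?sub0r //; apply: ndvd; have := t_pos; clear -ht; lia.
rewrite (c_dvd _ (dvdn0 _)) subr_eq0 eq_sym.
by case: (x =P 1) => _ /=; rewrite ?mul1r ?mul0r ?mulr1 ?mulr0 ?subrr ?subr0.
Qed.

Lemma J2t2t : J (2 * t) (2 * t) = -1.
Proof.
have := Gen (2 * t) (2 * t).
rewrite Gphi -mulnDl -[(2+2)%N]/4%N -ht Gn (sum_c_dvd hT) ?dvdnn // cm1 mul1r nR.
move=> e; set X := J _ _ in e *; set Q := (#|F|)%:R in e *.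
have -> : X = Q - (X * -1 + (Q - 1)) - 1 by ring.
by rewrite -e; ring.
Qed.


Lemma four_nz : (4%:R : F) != 0.
Proof. by rewrite -[4%N]/(2 * 2)%N natrM mulf_neq0. Qed.

Lemma lam_nz : lam != 0.
Proof. by apply/eqP => l0; move: hlam; rewrite l0 expr0n /= => /eqP; rewrite eq_sym oner_eq0. Qed.

Lemma c4lam j : c (4 * j) (4%:R * lam) = c j 4%:R ^+ 4.
Proof.
rewrite cM /mchar_pow (negbTE four_nz) (negbTE lam_nz) -!exprM.
by rewrite [X in _ * X]exprM -(TX hT lam 4) hlam (T1 hT) expr1n mulr1 mulnC.
Qed.

Lemma c4lam_dvd j : (n %| 4 * j)%N -> c (4 * j) (4%:R * lam) = 1.
Proof. by move=> d; rewrite c_dvd // mulf_neq0 // ?four_nz ?lam_nz. Qed.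

Definition term j := G j ^+ 2 * G (2 * t + j)%N ^+ 2 / G (4 * j)%N * c (4 * j)%N (4%:R * lam).

Lemma term0 : term 0 = - q%:R.
Proof.
rewrite /term c4lam_dvd ?muln0 ?dvdn0 // addn0 G0 mulr1 (expr2 (G (2 * t))) Gphi.
by rewrite sqrrN expr1n mul1r invrN invr1 mulrN1.
Qed.

Lemma term2t : term (2 * t) = - q%:R.
Proof.
rewrite /term c4lam_dvd; last by rewrite ht mulnCA dvdn_mull.
have -> : (2 * t + 2 * t = n)%N by clear -ht; lia.
have -> : (4 * (2 * t) = n + n)%N by clear -ht; lia.
rewrite G_addn Gn (expr2 (G (2 * t))) Gphi.
by rewrite sqrrN expr1n mulr1 invrN invr1 mulrN1 mulr1.
Qed.

Lemma Gt3t : G t * G (2 * t + t)%N = c t (-1) * q%:R.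
Proof.
rewrite F6 //; first by have -> : (t + (2 * t + t) = n)%N by clear -ht; lia.
by apply: ndvd; have := t_pos; clear -ht; lia.
Qed.

Lemma termt : term t = - (q%:R ^+ 2).
Proof.
rewrite /term c4lam_dvd; last by rewrite ht.
rewrite -ht Gn -exprMn Gt3t exprMn cm1t mul1r mulr1 invrN invr1 mulrN1 //.
Qed.

Lemma term3t : term (3 * t) = - (q%:R ^+ 2).
Proof.
rewrite /term c4lam_dvd; last by rewrite ht mulnCA dvdn_mull.
have -> : (2 * t + 3 * t = t + n)%N by clear -ht; lia.
have -> : (4 * (3 * t) = n + n + n)%N by clear -ht; lia.
have -> : (3 * t = 2 * t + t)%N by clear -ht; lia.
rewrite !G_addn Gn (mulrC (G (2 * t + t) ^+ 2)) -exprMn Gt3t exprMn cm1t mul1r mulr1 invrN invr1 mulrN1 //.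
Qed.

Lemma Jcomb j : ~~ (n %| j)%N -> ~~ (n %| 2 * t + j)%N ->
  J (2 * t) j * J (2 * t) (2 * t + j) = q%:R.
Proof.
move=> d1 d2.
have e4 := F5 d2.
have e5 : G (2 * t) * G (2 * t + j)%N = J (2 * t) (2 * t + j) * G j.
  rewrite F5.
    rewrite (_ : (2 * t + (2 * t + j) = j + n)%N) ?G_addn //; clear -ht; lia.
  rewrite (_ : (2 * t + (2 * t + j) = j + n)%N) ?(dvdn_addl _ (dvdnn _)) //; clear -ht; lia.
have nz : G j * G (2 * t + j)%N != 0 by rewrite mulf_neq0 ?Gnz.
apply: (mulIf nz); rewrite -Gphi.
transitivity ((J (2 * t) j * G (2 * t + j)%N) * (J (2 * t) (2 * t + j) * G j)); first ring.
by rewrite -e4 -e5; ring.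
Qed.

Lemma term_gen j : ~~ (n %| 4 * j)%N -> term j = q%:R * J (2 * t) (2 * j).
Proof.
move=> d.
have d1 : ~~ (n %| j)%N by apply: contra d => /dvdn_mull ->.
have d2 : ~~ (n %| 2 * j)%N by apply: contra d => h; rewrite -[4%N]/(2 * 2)%N -mulnA dvdn_mull.
have d3 : ~~ (n %| 2 * t + j)%N.
  apply: contra d2 => h; have : (n %| (2 * t + j) + (2 * t + j))%N by rewrite dvdn_add.
  by rewrite (_ : ((2 * t + j) + (2 * t + j) = 2 * j + n)%N) ?(dvdn_addl _ (dvdnn _)) //; clear -ht; lia.
have X1 : G j ^+ 2 = J j j * G (2 * j)%N.
  by rewrite expr2 F5 ?addnn -?mul2n.
have X2 : G (2 * t + j)%N ^+ 2 = J (2 * t + j) (2 * t + j) * G (2 * j)%N.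
  rewrite expr2 F5.
    rewrite (_ : ((2 * t + j) + (2 * t + j) = 2 * j + n)%N) ?G_addn //; clear -ht; lia.
  rewrite (_ : ((2 * t + j) + (2 * t + j) = 2 * j + n)%N) ?(dvdn_addl _ (dvdnn _)) //; clear -ht; lia.
have X3 : G (2 * j)%N ^+ 2 = J (2 * j) (2 * j) * G (4 * j)%N.
  by rewrite expr2 F5 ?addnn -?mul2n ?mulnA.
have D1 := Dlem d1; have D2 := Dlem d3; have D3 := Dlem d2.
have K := Jcomb d1 d3.
have c2t4 : c (2 * t + j) 4%:R = c j 4%:R.
  have -> : (4%:R : F) = 2%:R ^+ 2 by rewrite -natrX.
  by rewrite cD (phi_sq hT ht h2) mul1r.
have c2j : c (2 * j) 4%:R = c j 4%:R ^+ 2.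
  by rewrite /mchar_pow (negbTE four_nz) -exprM mulnC.
rewrite /term X1 X2 c4lam.
have -> : J j j * G (2 * j)%N * (J (2 * t + j) (2 * t + j) * G (2 * j)%N)
  = J j j * J (2 * t + j) (2 * t + j) * G (2 * j)%N ^+ 2 by ring.
rewrite X3 mulrA mulfK ?Gnz // -K -D3 -D1 -D2 c2t4 c2j; ring.
Qed.


Lemma sumc2j y : \sum_(j < n) c (2 * j) y = (y ^+ 2 == 1)%:R * n%:R.
Proof.
case: (y =P 0) => [->|/eqP y0].
  by rewrite big1 => [|j _]; rewrite ?c0 // expr0n /= eq_sym oner_eq0 mul0r.
have y2 : y ^+ 2 != 0 by rewrite expf_neq0.
rewrite (eq_bigr (fun j : 'I_n => c j (y ^+ 2))) => [|j _].
  by rewrite (ortho1 hT y2); case: (_ == 1); rewrite ?mul1r ?mul0r.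
by rewrite /mchar_pow (negbTE y0) (negbTE y2) (TX hT) -exprM.
Qed.

Lemma sumJ : \sum_(0 <= j < n) J (2 * t) (2 * j) = n%:R * c (2 * t) 2%:R.
Proof.
rewrite big_mkord /Jac exchange_big /=.
rewrite (eq_bigr (fun x => n%:R * ((0 == x)%:R * c (2 * t) x + (2%:R == x)%:R * c (2 * t) x))) => [|x _].
  by rewrite -mulr_sumr big_split /= !sum1 c0 add0r.
rewrite -mulr_sumr sumc2j sqrf_eq1.
have e1 : (1 - x == 1) = (0 == x) by rewrite -subr_eq0 addrAC subrr add0r oppr_eq0 eq_sym.
have e2 : (1 - x == -1) = (2%:R == x).
  apply/eqP/eqP => [e|<-]; last by ring.
  rewrite (_ : x = 1 - (1 - x)); last by ring.
  by rewrite e; ring.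
rewrite e1 e2.
case: (0 =P x) => [<-|_]; case: (2%:R =P x) => [e|_] //=; rewrite ?mul1r ?mul0r ?add0r ?addr0 ?mulr0; try ring.
all: by rewrite ?c0; ring.
Qed.


Lemma phi2_eq : c (2 * t) 2%:R = c t (-1).
Proof.
have [w [pw _]] := Tprim hT.
pose i := w ^+ t.
have i2 : i ^+ 2 = -1.
  have : (w ^+ (2 * t)) ^+ 2 == 1.
    by rewrite -exprM (_ : (2 * t * 2 = n)%N) ?(prim_expr_order pw) //; clear -ht; lia.
  rewrite sqrf_eq1 => /orP [/eqP h|/eqP h].
    have : (n %| 2 * t)%N by rewrite (prim_order_dvd pw) h.
    by rewrite (negbTE (ndvd _ _)) //; have := t_pos; clear -ht; lia.
  by rewrite /i -exprM mulnC.
have inz : i != 0 by apply/eqP => i0; move: i2; rewrite i0 expr0n /= => /eqP; rewrite eq_sym oppr_eq0 oner_eq0.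
have e : (1 + i) ^+ 2 = 2%:R * i.
  rewrite (_ : (1 + i) ^+ 2 = 1 + 2%:R * i + i ^+ 2); last by ring.
  by rewrite i2; ring.
have nz1 : 1 + i != 0.
  by apply/eqP => h; move: e; rewrite h expr0n /= => /eqP; rewrite eq_sym mulf_eq0 (negbTE h2) (negbTE inz).
have := phi_sq hT ht nz1; rewrite e cM.
have -> : c (2 * t) i = c t (-1).
  by rewrite /mchar_pow (negbTE inz) oppr_eq0 oner_eq0 exprM -(TX hT i 2) i2.
move=> h.
by rewrite -[LHS]mulr1 -cm1t expr2 mulrA h mul1r.
Qed.

Lemma term_split j : (j < n)%N ->
  term j = q%:R * J (2 * t) (2 * j) + ((j == t)%:R + (j == 3 * t)%:R) * (q%:R - q%:R ^+ 2).
Proof.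
move=> jn.
case: (boolP (n %| 4 * j)%N) => d; last first.
  rewrite term_gen //.
  have -> : (j == t) = false.
    by apply/eqP => jt; move: d; rewrite jt ht dvdnn.
  have -> : (j == 3 * t) = false.
    by apply/eqP => jt; move: d; rewrite jt ht mulnCA dvdn_mull.
  by rewrite add0r mul0r addr0.
have [k ek] : exists k, j = (k * t)%N.
  move: d; rewrite ht => /dvdnP [k ek]; exists k.
  by apply/eqP; rewrite -(eqn_pmul2l (isT : (0 < 4)%N)) ek mulnCA mulnA.
have k4 : (k < 4)%N.
  by move: jn; rewrite ek ht ltn_mul2r => /andP [].
have tp := t_pos.
move: k4 ek; case: k => [|[|[|[|k]]]] // _ ->; rewrite ?mul0n ?mul1n.
- have -> : (0 == t) = false by apply/eqP; clear -tp; lia.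
  have -> : (0 == 3 * t) = false by apply/eqP; clear -tp; lia.
  rewrite term0 muln0 J2t0.
  by rewrite add0r mul0r addr0 mulrN1.
- rewrite termt J2t2t eqxx (_ : (t == 3 * t) = false); last by apply/eqP; clear -tp; lia.
  by rewrite addr0 mul1r; ring.
- rewrite term2t (_ : (2 * (2 * t) = n)%N); last by clear -ht; lia.
  rewrite -[n]add0n J_addn J2t0 (_ : (2 * t == t) = false); last by apply/eqP; clear -tp; lia.
  rewrite (_ : (2 * t == 3 * t) = false); last by apply/eqP; clear -tp; lia.
  by rewrite add0r mul0r addr0 mulrN1.
- rewrite term3t (_ : (2 * (3 * t) = 2 * t + n)%N); last by clear -ht; lia.
  rewrite J_addn J2t2t eqxx (_ : (3 * t == t) = false); last by apply/eqP; clear -tp; lia.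
  by rewrite add0r mul1r; ring.
Qed.

End Main.

Unset Implicit Arguments.
Set Strict Implicit.


Lemma sum_ind (n i : nat) (a : algC) : (i < n)%N -> \sum_(0 <= j < n) ((j == i)%:R * a) = a.
Proof.
move=> hi; rewrite big_mkord (bigD1 (Ordinal hi)) //= eqxx mul1r big1 ?addr0 // => j hj.
rewrite (_ : (nat_of_ord j == i) = false) ?mul0r //.
by apply/negbTE; apply: contra hj => /eqP e; apply/eqP/val_inj.
Qed.

Theorem corollary4p7 (F : finFieldType) (p : nat) (zeta : algC) (T : F -> algC)
    (lam : F)
    (hp : prime p) (hpodd : odd p) (hchar : p \in [pchar F])
    (hq : (#|F| %% 4 = 1)%N)
    (hzeta : p.-primitive_root zeta)
    (hT : mchar_generator T)
    (hlam : lam ^+ 4 = 1) :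
  let q := #|F| in
  let t := ((q - 1) %/ 4)%N in
  3 / (q.-1)%:R *
    \sum_(0 <= j < q.-1)
      (gauss p zeta (mchar_pow T j) ^+ 2 * gauss p zeta (mchar_pow T (2 * t + j)) ^+ 2
         / gauss p zeta (mchar_pow T (4 * j)) * mchar_pow T (4 * j) (4%:R * lam))
  = - (6 * q%:R) + 3 * q%:R * mchar_pow T t (-1).
Proof.
move=> q t.
have hq1 : (1 < #|F|)%N := finNzRing_gt1 F.
have ht : #|F|.-1 = (4 * t)%N.
  have d : (4 %| #|F| - 1)%N.
    by rewrite -eqn_mod_dvd ?hq // ltnW.
  by rewrite /t /q -subn1 mulnC divnK.
have h2 : (2%:R : F) != 0.
  rewrite -(dvdn_pcharf hchar); apply/negP => d2.
  have p2 : p = 2%N by apply/eqP; rewrite eqn_leq (dvdn_leq _ d2) // prime_gt1.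
  by move: hpodd; rewrite p2.
have tn : (t < #|F|.-1)%N by rewrite ht; have := t_pos ht; clear; lia.
have t3n : (3 * t < #|F|.-1)%N by rewrite ht; have := t_pos ht; clear; lia.
rewrite (eq_big_nat _ _ (fun j hj => term_split hp hchar hzeta hT hlam ht h2 (andP hj).2)).
rewrite big_split /=.
rewrite -big_distrr /= sumJ.
rewrite (eq_bigr (fun i => (i == t)%:R * (#|F|%:R - #|F|%:R ^+ 2) + (i == 3 * t)%:R * (#|F|%:R - #|F|%:R ^+ 2))) => [|i _]; last by rewrite mulrDl.
rewrite big_split /= !sum_ind //.
rewrite phi2_eq // (nR F).
have nz : (q%:R - 1 : algC) != 0 by rewrite -(nR F) pnatr_eq0 -lt0n (n_gt0 F).
rewrite /q; field.
  exact: nz.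
exact: hT.
Qed.
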